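(* Let $\mathcal A$ be a finite set, $\phi:F(\mathcal A)\to F(\mathcal A)$ a homomorphism, $\mathcal R\subset F(\mathcal A)$ finite, and let $G$ be the ascending HNN extension with finite presentation $\mathcal P=\langle t,\mathcal A:\mathcal R,\ t^{-1}at=\phi(a)\ \text{for all } a\in\mathcal A\rangle$. Then the subgroup $A$ of $G$ generated by $\mathcal A$ has presentation $$A=\Big\langle \mathcal A:\ N^\infty(\mathcal R,\phi)\equiv\bigcup_{i=0}^\infty\phi^{-i}\Big(N\big(\textstyle\bigcup_{j=0}^\infty\phi^j(\mathcal R)\big)\Big)\Big\rangle.$$ Furthermore: (1) $\phi^{-i}(N(\bigcup_{j\ge0}\phi^j(\mathcal R)))\subset\phi^{-(i+1)}(N(\bigcup_{j\ge0}\phi^j(\mathcal R)))$ for all $i\ge0$; (2) $\phi(N^\infty(\mathcal R,\phi))\subset N^\infty(\mathcal R,\phi)=\phi^{-1}(N^\infty(\mathcal R,\phi))$.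
   Context: $F(\mathcal A)$ is the free group on $\mathcal A$; for $S\subset F(\mathcal A)$, $N(S)$ denotes the normal closure of $S$ in $F(\mathcal A)$, and $\phi^{-i}$ denotes full preimage under $\phi^i$. *)

(* Defs.v *)
From HB Require Import structures.
From mathcomp Require Import all_boot.
Set Implicit Arguments. Unset Strict Implicit. Unset Printing Implicit Defensive.

Section FreeGroup.
Variable X : eqType.

(* a letter (x, false) stands for x, (x, true) for x^-1 *)
Definition letter := (X * bool)%type.
Definition linv (l : letter) : letter := (l.1, ~~ l.2).

Definition push (l : letter) (acc : seq letter) : seq letter :=
  match acc with
  | l' :: acc' => if l' == linv l then acc' else l :: acc
  | [::] => [:: l]
  end.
Definition reduce (w : seq letter) : seq letter := foldr push [::] w.

Fixpoint reducedb (s : seq letter) : bool :=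
  match s with
  | x :: ((y :: _) as t) => (y != linv x) && reducedb t
  | _ => true
  end.

Lemma reducedb_push l acc : reducedb acc -> reducedb (push l acc).
Proof.
case: acc => [|l' acc] //= H.
case: ifP => E; first by case: acc H => [|y t] //= /andP[].
by rewrite /= H E.
Qed.

Lemma reducedb_reduce w : reducedb (reduce w).
Proof. by elim: w => [|l w IH] //=; apply: reducedb_push. Qed.

Record fgroup := FG { fword : seq letter; fwordP : reducedb fword }.

HB.instance Definition _ := [isSub for fword].
HB.instance Definition _ := [Equality of fgroup by <:].

Definition fmk (w : seq letter) : fgroup := FG (reducedb_reduce w).
Definition fone : fgroup := @FG [::] isT.
Definition fmul (u v : fgroup) : fgroup := fmk (fword u ++ fword v).
Definition finv (u : fgroup) : fgroup := fmk (rev (map linv (fword u))).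
Definition fgen (x : X) : fgroup := fmk [:: (x, false)].

Inductive nclosure (S : fgroup -> Prop) : fgroup -> Prop :=
  | ncl_base s : S s -> nclosure S s
  | ncl_one : nclosure S fone
  | ncl_mul u v : nclosure S u -> nclosure S v -> nclosure S (fmul u v)
  | ncl_inv u : nclosure S u -> nclosure S (finv u)
  | ncl_conj u g : nclosure S u -> nclosure S (fmul (finv g) (fmul u g)).

End FreeGroup.

Arguments fone {X}.

Definition is_fhom (X Y : eqType) (f : fgroup X -> fgroup Y) : Prop :=
  forall u v, f (fmul u v) = fmul (f u) (f v).

Definition fext (X Y : eqType) (f : X -> fgroup Y) (u : fgroup X) : fgroup Y :=
  foldr (fun l acc => fmul (if l.2 then finv (f l.1) else f l.1) acc) fone (fword u).

(* F(A) -> F({t} + A), with t = None and a = Some a *)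
Definition fincl (A : eqType) : fgroup A -> fgroup (option A) :=
  fext (fun a => fgen (Some a)).

Definition NR (A : eqType) (R : seq (fgroup A)) (phi : fgroup A -> fgroup A)
  : fgroup A -> Prop :=
  nclosure (fun w => exists j r, r \in R /\ w = iter j phi r).

Definition Ninf (A : eqType) (R : seq (fgroup A)) (phi : fgroup A -> fgroup A)
  (w : fgroup A) : Prop :=
  exists i, NR R phi (iter i phi w).

Definition hnn_rel (A : eqType) (R : seq (fgroup A)) (phi : fgroup A -> fgroup A)
  (w : fgroup (option A)) : Prop :=
  (exists2 r, r \in R & w = fincl r) \/
  (exists a : A, w = fmul (finv (fgen None))
                      (fmul (fgen (Some a))
                         (fmul (fgen None) (finv (fincl (phi (fgen a))))))).

(* Main.v *)
From Stdlib Require Import ZArith Lia FunctionalExtensionality.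
Require Import Defs.
From mathcomp Require Import all_boot.
Require Import Defs.
Set Implicit Arguments. Unset Strict Implicit. Unset Printing Implicit Defensive.

Section FG.
Variable X : eqType.
Implicit Types (s r acc : seq (letter X)) (l : letter X) (u v w : fgroup X).

Lemma linvK l : linv (linv l) = l.
Proof. by case: l => x [] . Qed.

Lemma reduce_id s : reducedb s -> reduce s = s.
Proof.
elim: s => [|l s IH] //= H.
have Hs : reducedb s by case: s H {IH} => // y t /andP[].
rewrite IH //; case: s H {IH Hs} => [|y t] //= /andP[H _].
by rewrite (negbTE H).
Qed.

Lemma push_cancel l acc : reducedb acc -> push l (push (linv l) acc) = acc.
Proof.
case: acc => [|y r] /=; first by rewrite eqxx.
rewrite linvK; case: eqP => [->|Hy] H.
  case: r H => [|z r] //= /andP[Hz _]; by rewrite (negbTE Hz).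
by rewrite /= eqxx.
Qed.

Definition act s acc := foldr (@push X) acc s.

Lemma reducedb_act s acc : reducedb acc -> reducedb (act s acc).
Proof. by elim: s => [|l s IH] //= H; apply: reducedb_push; apply: IH. Qed.

Lemma act_push l r acc : reducedb acc ->
  act (push l r) acc = push l (act r acc).
Proof.
move=> Hacc; case: r => [|y r] //=.
case: eqP => [->|_] //=.
by rewrite push_cancel // reducedb_act.
Qed.

Lemma act_reduce s acc : reducedb acc -> act (reduce s) acc = act s acc.
Proof.
move=> Hacc; elim: s => [|l s IH] //=.
by rewrite act_push // IH.
Qed.

Lemma reduce_cat s r : reduce (s ++ r) = act s (reduce r).
Proof. by rewrite /reduce foldr_cat. Qed.

Lemma act_cat s r acc : act (s ++ r) acc = act s (act r acc).
Proof. by rewrite /act foldr_cat. Qed.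

Lemma act_inv s acc : reducedb acc ->
  act (rev (map (@linv X) s)) (act s acc) = acc.
Proof.
elim: s acc => [|l s IH] acc Hacc //=.
rewrite rev_cons -cats1 act_cat /= -{2}(linvK l) push_cancel ?IH //.
exact: reducedb_act.
Qed.

Lemma act_inv' s acc : reducedb acc ->
  act s (act (rev (map (@linv X) s)) acc) = acc.
Proof.
move=> H; have := act_inv (rev (map (@linv X) s)) H.
rewrite map_rev revK -map_comp (@eq_map _ _ _ id) ?map_id //.
by move=> l /=; rewrite linvK.
Qed.

Lemma fval u : fmk (fword u) = u.
Proof. by apply: val_inj; rewrite /= reduce_id // fwordP. Qed.

Lemma fmulA u v w : fmul u (fmul v w) = fmul (fmul u v) w.
Proof.
apply: val_inj => /=.
rewrite [in RHS]reduce_cat act_reduce ?reducedb_reduce // act_cat.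
by rewrite reduce_cat (reduce_id (reducedb_reduce _)) reduce_cat.
Qed.

Lemma fmul1 u : fmul fone u = u.
Proof. by apply: val_inj; rewrite /= reduce_id // fwordP. Qed.

Lemma fmulu1 u : fmul u fone = u.
Proof. by apply: val_inj; rewrite /= cats0 reduce_id // fwordP. Qed.

Lemma fmulVu u : fmul (finv u) u = fone.
Proof.
apply: val_inj => /=; rewrite reduce_cat act_reduce //.
rewrite (reduce_id (fwordP u)) -{2}(reduce_id (fwordP u)) act_inv //.
exact: (reducedb_reduce (fword u)).
Qed.

Lemma fmuluV u : fmul u (finv u) = fone.
Proof.
apply: val_inj => /=; rewrite reduce_cat (reduce_id (reducedb_reduce _)).
by rewrite /reduce act_inv'.
Qed.


Lemma fmulKu u v : fmul (finv u) (fmul u v) = v.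
Proof. by rewrite fmulA fmulVu fmul1. Qed.

Lemma fmulVKu u v : fmul u (fmul (finv u) v) = v.
Proof. by rewrite fmulA fmuluV fmul1. Qed.

Lemma fmulUK u v : fmul (fmul u v) (finv v) = u.
Proof. by rewrite -fmulA fmuluV fmulu1. Qed.

Lemma fmulUVK u v : fmul (fmul u (finv v)) v = u.
Proof. by rewrite -fmulA fmulVu fmulu1. Qed.

Lemma finv_uniq u v : fmul u v = fone -> u = finv v.
Proof. by move=> H; rewrite -(fmulUK u v) H fmul1. Qed.

Lemma finvK u : finv (finv u) = u.
Proof. by symmetry; apply: finv_uniq; apply: fmuluV. Qed.

Lemma finv1 : finv (@fone X) = fone.
Proof. by symmetry; apply: finv_uniq; rewrite fmul1. Qed.

Lemma finvM u v : finv (fmul u v) = fmul (finv v) (finv u).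
Proof.
symmetry; apply: finv_uniq.
by rewrite -fmulA (fmulA (finv u)) fmulVu fmul1 fmulVu.
Qed.

Lemma foldr_reduce (T : Type) (F : letter X -> T -> T) (x0 : T) :
  (forall l x, F l (F (linv l) x) = x) ->
  forall s, foldr F x0 (reduce s) = foldr F x0 s.
Proof.
move=> HF; elim=> [|l s IH] //=.
rewrite -IH; case: (reduce s) => [|y r] //=.
case: eqP => [->|_] //=.
Qed.

Definition gl l : fgroup X := if l.2 then finv (fgen l.1) else fgen l.1.

Lemma fword_fgen (x : X) : fword (fgen x) = [:: (x, false)].
Proof. by []. Qed.

Lemma fword_finv_fgen (x : X) : fword (finv (fgen x)) = [:: (x, true)].
Proof. by []. Qed.

Lemma fword_gl l : fword (gl l) = [:: l].
Proof. by case: l => x []. Qed.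

Lemma word_ind (Q : fgroup X -> Prop) :
  Q fone -> (forall l u, Q u -> Q (fmul (gl l) u)) -> forall u, Q u.
Proof.
move=> H1 HS [s Hs]; elim: s Hs => [|l s IH] Hs.
  by have -> : FG Hs = fone by apply: val_inj.
have Hs' : reducedb s by case: s Hs {IH} => // y t /andP[].
have -> : FG Hs = fmul (gl l) (FG Hs').
  by apply: val_inj; rewrite /= fword_gl /=; have := reduce_id Hs; rewrite /= => ->.
by apply: HS; apply: IH.
Qed.

End FG.

Arguments gl {X}.

Section Hom.
Variables X Y : eqType.
Implicit Types (f : fgroup X -> fgroup Y).

Lemma fhom1 f : is_fhom f -> f fone = fone.
Proof.
move=> Hf; have H := Hf fone fone; rewrite fmul1 in H.
by rewrite -(fmulKu (f fone) (f fone)) -H fmulVu.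
Qed.

Lemma fhomV f : is_fhom f -> forall u, f (finv u) = finv (f u).
Proof.
move=> Hf u; apply: finv_uniq; by rewrite -Hf fmulVu fhom1.
Qed.

Definition lval (g : X -> fgroup Y) (l : letter X) :=
  if l.2 then finv (g l.1) else g l.1.

Lemma fext_fold (g : X -> fgroup Y) s y :
  foldr (fun l acc => fmul (lval g l) acc) y s =
  fmul (foldr (fun l acc => fmul (lval g l) acc) fone s) y.
Proof. by elim: s => [|l s IH] /=; rewrite ?fmul1 // IH fmulA. Qed.

Lemma fext_hom (g : X -> fgroup Y) : is_fhom (fext g).
Proof.
move=> u v; rewrite /fext [fword (fmul u v)]/= foldr_reduce.
  by rewrite foldr_cat fext_fold.
move=> [x b] y; case: b; [exact: fmulKu | exact: fmulVKu].
Qed.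

Lemma fext_gl (g : X -> fgroup Y) l : fext g (gl l) = lval g l.
Proof. by rewrite /fext fword_gl /= fmulu1. Qed.

Lemma fhom_gl f l : is_fhom f -> f (gl l) = lval (fun x => f (fgen x)) l.
Proof. by case: l => x [] Hf //=; rewrite /lval /= fhomV. Qed.

End Hom.


Lemma ncl_map (X Y : eqType) (f : fgroup X -> fgroup Y) (S : fgroup X -> Prop)
  (S' : fgroup Y -> Prop) : is_fhom f ->
  (forall s, S s -> nclosure S' (f s)) ->
  forall x, nclosure S x -> nclosure S' (f x).
Proof.
move=> Hf HS x; elim=> {x}.
- by [].
- by rewrite fhom1 //; apply: ncl_one.
- by move=> u v _ Hu _ Hv; rewrite Hf; apply: ncl_mul.
- by move=> u _ Hu; rewrite fhomV //; apply: ncl_inv.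
- by move=> u g _ Hu; rewrite !Hf fhomV //; apply: ncl_conj.
Qed.

Lemma ncl_id (X : eqType) (S : fgroup X -> Prop) x : S x -> nclosure S x.
Proof. exact: ncl_base. Qed.

Lemma fext_hom' (X Y : eqType) (g : X -> fgroup Y) : is_fhom (fext g).
Proof. exact: fext_hom. Qed.

Lemma iter_hom (X : eqType) (phi : fgroup X -> fgroup X) :
  is_fhom phi -> forall i, is_fhom (iter i phi).
Proof. by move=> Hp; elim=> [|i IH] u v //=; rewrite IH Hp. Qed.

Section Main.
Variable A : eqType.
Variable phi : fgroup A -> fgroup A.
Hypothesis phi_hom : is_fhom phi.
Variable R : seq (fgroup A).

Lemma NR_phi x : NR R phi x -> NR R phi (phi x).
Proof.
apply: ncl_map => // s [j [r [Hr ->]]].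
by apply: ncl_base; exists j.+1, r.
Qed.

Lemma NR_iter i k x : NR R phi (iter i phi x) -> NR R phi (iter (k + i) phi x).
Proof. by elim: k => [|k IH] //= H; rewrite iterD /=; apply: NR_phi; rewrite -iterD; apply: IH. Qed.

Lemma Ninf_phi w : Ninf R phi w <-> Ninf R phi (phi w).
Proof.
split=> [[i H]|[i H]].
  by exists i; rewrite -iterSr /=; apply: NR_phi.
by exists i.+1; rewrite iterSr.
Qed.

Lemma Ninf_iter k w : Ninf R phi (iter k phi w) -> Ninf R phi w.
Proof. by elim: k w => [|k IH] w //= H; apply: IH; apply/Ninf_phi. Qed.

Lemma Ninf_one : Ninf R phi fone.
Proof. by exists 0; apply: ncl_one. Qed.

Lemma Ninf_mul u v : Ninf R phi u -> Ninf R phi v -> Ninf R phi (fmul u v).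
Proof.
move=> [i Hi] [j Hj]; exists (j + i).
rewrite iter_hom //; apply: ncl_mul; first exact: NR_iter.
by rewrite addnC; apply: NR_iter.
Qed.

Lemma Ninf_inv u : Ninf R phi u -> Ninf R phi (finv u).
Proof. by move=> [i Hi]; exists i; rewrite (fhomV (iter_hom phi_hom i)); apply: ncl_inv. Qed.

Lemma Ninf_conj u g : Ninf R phi u -> Ninf R phi (fmul (finv g) (fmul u g)).
Proof. by move=> [i Hi]; exists i; rewrite !(iter_hom phi_hom) (fhomV (iter_hom phi_hom i)); apply: ncl_conj. Qed.

End Main.


Section Back.
Variable A : eqType.
Variable phi : fgroup A -> fgroup A.
Hypothesis phi_hom : is_fhom phi.
Variable R : seq (fgroup A).

Local Notation T := (option A).
Local Notation N := (nclosure (hnn_rel R phi)).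
Definition eqv (x y : fgroup T) := N (fmul x (finv y)).
Local Notation tt := (fgen (@None A)).
Definition conjt (y : fgroup T) := fmul (finv tt) (fmul y tt).

Lemma fincl_hom : is_fhom (@fincl A).
Proof. exact: fext_hom. Qed.

Lemma eqv_N x y : eqv x y -> N x <-> N y.
Proof.
move=> H; split=> Hx.
  have -> : y = fmul (finv (fmul x (finv y))) x.
    by rewrite finvM finvK -fmulA fmulVu fmulu1.
  by apply: ncl_mul => //; apply: ncl_inv.
have -> : x = fmul (fmul x (finv y)) y by rewrite fmulUVK.
exact: ncl_mul.
Qed.

Lemma eqv_sym x y : eqv x y -> eqv y x.
Proof. by move=> H; have := ncl_inv H; rewrite /eqv finvM finvK. Qed.

Lemma eqv_mul x x' y y' : eqv x x' -> eqv y y' -> eqv (fmul x y) (fmul x' y').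
Proof.
move=> Hx Hy; rewrite /eqv.
have -> : fmul (fmul x y) (finv (fmul x' y')) =
  fmul (fmul (finv (finv x)) (fmul (fmul y (finv y')) (finv x))) (fmul x (finv x')).
  by rewrite finvK finvM !fmulA fmulUVK.
by apply: ncl_mul => //; apply: ncl_conj.
Qed.

Lemma eqv_inv x x' : eqv x x' -> eqv (finv x) (finv x').
Proof.
move=> Hx; rewrite /eqv finvK.
have -> : fmul (finv x) x' = fmul (finv x) (fmul (fmul x' (finv x)) x).
  by rewrite fmulUVK.
by apply: ncl_conj; apply: eqv_sym.
Qed.

Lemma conjt_mul x y : conjt (fmul x y) = fmul (conjt x) (conjt y).
Proof. by rewrite /conjt !fmulA fmulUK. Qed.

Lemma conjt_inv x : conjt (finv x) = finv (conjt x).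
Proof. by rewrite /conjt !finvM finvK fmulA. Qed.

Lemma N_conjt y : N (conjt y) <-> N y.
Proof.
split=> H; last exact: ncl_conj.
have -> : y = fmul (finv (finv tt)) (fmul (conjt y) (finv tt)).
  by rewrite finvK /conjt !fmulA fmuluV fmul1 fmulUK.
exact: ncl_conj.
Qed.

Lemma fincl_gen (a : A) : fincl (fgen a) = fgen (Some a).
Proof. by rewrite /fincl /fext /= fmulu1. Qed.

Lemma fincl_phi x : eqv (fincl (phi x)) (conjt (fincl x)).
Proof.
elim/word_ind: x => [|[a b] u IH].
  rewrite (fhom1 phi_hom) (fhom1 fincl_hom) /conjt fmul1 fmulVu.
  by rewrite /eqv finv1 fmul1; apply: ncl_one.
rewrite phi_hom !fincl_hom conjt_mul; apply: eqv_mul => //.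
have Hg : eqv (fincl (phi (fgen a))) (conjt (fincl (fgen a))).
  apply: eqv_sym; rewrite /eqv /conjt fincl_gen; apply: ncl_base; right; exists a.
  by rewrite !fmulA.
case: b => //=.
rewrite (fhomV phi_hom) (fhomV fincl_hom) (fhomV fincl_hom) conjt_inv.
exact: eqv_inv.
Qed.

Lemma N_fincl_phi x : N (fincl (phi x)) <-> N (fincl x).
Proof. by rewrite (eqv_N (fincl_phi x)) N_conjt. Qed.

Lemma N_fincl_iter i x : N (fincl (iter i phi x)) <-> N (fincl x).
Proof. by elim: i => [|i IH] //=; rewrite N_fincl_phi. Qed.

Lemma NR_N v : NR R phi v -> N (fincl v).
Proof.
apply: ncl_map; first exact: fincl_hom.
move=> s [j [r [Hr ->]]]; apply/N_fincl_iter; apply: ncl_base; left; by exists r.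
Qed.

Lemma back w : nclosure (Ninf R phi) w -> N (fincl w).
Proof.
apply: ncl_map; first exact: fincl_hom.
move=> s [i Hi]; apply/(N_fincl_iter i); exact: NR_N.
Qed.

End Back.


Section Fwd.
Variable A : eqType.
Variable phi : fgroup A -> fgroup A.
Hypothesis phi_hom : is_fhom phi.
Variable R : seq (fgroup A).

Local Notation T := (option A).
Local Notation N := (nclosure (hnn_rel R phi)).

Definition eps_l (l : letter T) : Z :=
  match l with (None, false) => 1%Z | (None, true) => (-1)%Z | _ => 0%Z end.

Definition cl (l : letter T) (M : Z) : fgroup A :=
  match l with
  | (None, _) => fone
  | (Some a, b) => if b then finv (iter (Z.to_nat M) phi (fgen a))
                   else iter (Z.to_nat M) phi (fgen a)
  end.

Definition cstep (l : letter T) (F : Z -> fgroup A) : Z -> fgroup A :=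
  fun M => fmul (cl l M) (F (M - eps_l l)%Z).

Definition estep (l : letter T) (z : Z) : Z := (eps_l l + z)%Z.

Definition cw (u : fgroup T) := foldr cstep (fun _ => fone) (fword u).
Definition ew (u : fgroup T) := foldr estep 0%Z (fword u).

Lemma cstep_cancel l F : cstep l (cstep (linv l) F) = F.
Proof.
apply: functional_extensionality => M; rewrite /cstep.
case: l => [[a|] b]; rewrite /linv /=.
  rewrite !Z.sub_0_r; case: b => /=; [exact: fmulKu | exact: fmulVKu].
rewrite !fmul1; f_equal; case: b => /=; lia.
Qed.

Lemma estep_cancel l z : estep l (estep (linv l) z) = z.
Proof. case: l => [[a|] []]; cbv [estep linv eps_l fst snd negb]; lia. Qed.

Lemma craw_cat s r M :
  foldr cstep (fun _ => fone) (s ++ r) M =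
  fmul (foldr cstep (fun _ => fone) s M)
       (foldr cstep (fun _ => fone) r (M - foldr estep 0 s)%Z).
Proof.
elim: s M => [|l s IH] M /=; first by rewrite fmul1 Z.sub_0_r.
rewrite /cstep IH fmulA; do 2 f_equal; rewrite /estep; lia.
Qed.

Lemma cw_mul u v M : cw (fmul u v) M = fmul (cw u M) (cw v (M - ew u)%Z).
Proof.
rewrite /cw [fword (fmul u v)]/= foldr_reduce; last exact: cstep_cancel.
by rewrite craw_cat.
Qed.

Lemma ew_mul u v : ew (fmul u v) = (ew u + ew v)%Z.
Proof.
rewrite /ew [fword (fmul u v)]/= foldr_reduce; last exact: estep_cancel.
by rewrite foldr_cat; elim: (fword u) => [|l s IH] //=; rewrite IH /estep; lia.
Qed.

Lemma ew_one : ew fone = 0%Z. Proof. by []. Qed.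
Lemma cw_one M : cw fone M = fone. Proof. by []. Qed.

Lemma ew_inv u : ew (finv u) = (- ew u)%Z.
Proof. have := ew_mul u (finv u); rewrite fmuluV ew_one; lia. Qed.

Lemma cw_inv u M : cw (finv u) M = finv (cw u (M + ew u)%Z).
Proof.
have H : fmul (cw u (M + ew u)%Z) (cw (finv u) M) = fone.
  by have := cw_mul u (finv u) (M + ew u); rewrite fmuluV cw_one Z.add_simpl_r.
by rewrite (finv_uniq H) finvK.
Qed.

Lemma ew_fincl w : ew (fincl w) = 0%Z.
Proof.
elim/word_ind: w => [|[a b] u IH]; first by rewrite (fhom1 (@fincl_hom A)).
by rewrite fincl_hom ew_mul IH; case: b.
Qed.

Lemma cw_fincl w M : cw (fincl w) M = iter (Z.to_nat M) phi w.
Proof.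
elim/word_ind: w => [|[a b] u IH].
  by rewrite (fhom1 (@fincl_hom A)) (fhom1 (iter_hom phi_hom _)).
rewrite fincl_hom cw_mul ew_fincl Z.sub_0_r IH (iter_hom phi_hom).
case: b => /=.
  rewrite (fhomV (@fincl_hom A)) cw_inv ew_fincl Z.add_0_r fincl_gen.
  by rewrite (fhomV (iter_hom phi_hom _)) /cw /= /cstep /= fmulu1.
by rewrite fincl_gen /cw /= /cstep /= fmulu1.
Qed.

Definition P (u : fgroup T) := ew u = 0%Z /\
  exists M0, forall M, (M0 <= M)%Z -> Ninf R phi (cw u M).

Lemma P_N u : N u -> P u.
Proof.
elim=> {u}.
- move=> s [[r Hr ->]|[a ->]].
    split; first exact: ew_fincl.
    exists 0%Z => M _; rewrite cw_fincl; exists 0; apply: ncl_base.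
    by exists (Z.to_nat M), r.
  have e1 : ew (fgen (@None A)) = 1%Z by [].
  have e2 : ew (fgen (Some a)) = 0%Z by [].
  have c1 M : cw (fgen (@None A)) M = fone by rewrite /cw /= /cstep /= fmulu1.
  have c2 M : cw (fgen (Some a)) M = iter (Z.to_nat M) phi (fgen a)
    by rewrite /cw /= /cstep /= fmulu1.
  split.
    by rewrite !ew_mul !ew_inv e1 e2 ew_fincl.
  exists 0%Z => M HM.
  rewrite !cw_mul !ew_inv e1 e2 !cw_inv e1 c1 finv1 fmul1 ew_fincl Z.add_0_r.
  rewrite cw_fincl c1 fmul1 c2.
  have -> : (M - - 1 - 0 - 1 = M)%Z by lia.
  have -> : (Z.to_nat (M - -1)) = (Z.to_nat M).+1.
    have -> : (M - -1 = Z.succ M)%Z by lia.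
    by rewrite Z2Nat.inj_succ.
  by rewrite iterSr fmuluV; apply: Ninf_one.
- split=> //; exists 0%Z => M _; exact: Ninf_one.
- move=> u v _ [Hu [M1 H1]] _ [Hv [M2 H2]]; split; first by rewrite ew_mul Hu Hv.
  exists (Z.max M1 M2) => M HM; rewrite cw_mul Hu Z.sub_0_r.
  apply: (Ninf_mul phi_hom); [apply: H1 | apply: H2]; lia.
- move=> u _ [Hu [M1 H1]]; split; first by rewrite ew_inv Hu.
  exists M1 => M HM; rewrite cw_inv Hu Z.add_0_r; apply: (Ninf_inv phi_hom); exact: H1.
- move=> u g _ [Hu [M1 H1]]; split; first by rewrite !ew_mul ew_inv Hu; lia.
  exists (M1 - ew g)%Z => M HM.
  rewrite cw_mul cw_mul cw_inv ew_inv Hu.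
  have -> : (M - - ew g - 0 = M + ew g)%Z by lia.
  have -> : (M - - ew g = M + ew g)%Z by lia.
  apply: (Ninf_conj phi_hom); apply: H1; lia.
Qed.

End Fwd.


Theorem theorem4p4 (A : finType) (phi : fgroup A -> fgroup A)
  (phi_hom : is_fhom phi) (R : seq (fgroup A)) :
  (forall w : fgroup A,
     nclosure (hnn_rel R phi) (fincl w) <-> nclosure (Ninf R phi) w) /\
  (forall (i : nat) (w : fgroup A),
     NR R phi (iter i phi w) -> NR R phi (iter i.+1 phi w)) /\
  (forall w : fgroup A, Ninf R phi w -> Ninf R phi (phi w)) /\
  (forall w : fgroup A, Ninf R phi w <-> Ninf R phi (phi w)).
Proof.
split.
  move=> w; split; last exact: (@back _ phi phi_hom R w).
  move=> H; have [_ [M0 HM]] := P_N phi_hom H.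
  have := HM (Z.max M0 0) (Z.le_max_l _ _); rewrite cw_fincl // => H'.
  by apply: ncl_base; apply: (Ninf_iter phi_hom H').
split; first by move=> i w H; rewrite iterS; apply: NR_phi.
split; first by move=> w; case: (Ninf_phi phi_hom R w).
by move=> w; apply: (Ninf_phi phi_hom R w).
Qed.
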